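(* Let $n\ge1$, let $T=(T_{ii'jj'kk'})\in(\mathbb C^n)^{\otimes6}$ be nonzero and Hermitian when viewed as an operator on $\mathbb C^{n^3}$ (rows indexed by $(i,j,k)$, columns by $(i',j',k')$). Let $\mathcal S=\{P_1,\dots,P_{n^2}\}$ be a basis of $M_n$, orthogonal for the Hilbert–Schmidt inner product, consisting of Hermitian matrices with $P^2=\mathrm{Id}$. For $P,Q,R\in\mathcal S$ put $G_{P,Q,R}=\sum T_{ii'jj'kk'}\overline{P_{ii'}Q_{jj'}R_{kk'}}\in\mathbb R$ and $Z=\sum_{P,Q,R}|G_{P,Q,R}|$, and assume $Z>0$. Let $G$ be the three-player XOR game in which the triple $(P,Q,R)$ is asked with probability $|G_{P,Q,R}|/Z$ and the answers are accepted iff their parity matches the sign of $G_{P,Q,R}$. Then $\beta(G)\le Z^{-1}n^{9/2}\|T\|_{3,\epsilon}$ and $\beta^*(G)\ge Z^{-1}n^3\|T\|_{2,\epsilon}$; in particular $\beta^*(G)\ge n^{-3/2}\frac{\|T\|_{2,\epsilon}}{\|T\|_{3,\epsilon}}\beta(G)$.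
   Context: $\|T\|_{2,\epsilon}$ is the operator norm of $T$ viewed as an operator on $\mathbb C^{n^3}$ (equivalently the injective norm of $T\in\mathbb C^{n^3}\otimes\mathbb C^{n^3}$). $\|T\|_{3,\epsilon}=\sup|\sum T_{ii'jj'kk'}U_{ii'}V_{jj'}W_{kk'}|$ over $U,V,W\in\mathbb C^{n^2}$ of Euclidean norm at most $1$ (the injective norm of $T\in\mathbb C^{n^2}\otimes\mathbb C^{n^2}\otimes\mathbb C^{n^2}$). For a three-player XOR game with question distribution $\pi(x,y,z)$ and target signs $s_{xyz}\in\{\pm1\}$, the classical bias is $\beta(G)=\max_{a_x,b_y,c_z\in\{\pm1\}}|\sum\pi(x,y,z)s_{xyz}a_xb_yc_z|$ and the entangled bias is $\beta^*(G)=\sup|\sum\pi(x,y,z)s_{xyz}\langle\psi|A_x\otimes B_y\otimes C_z|\psi\rangle|$ over all $d$, unit $|\psi\rangle\in(\mathbb C^d)^{\otimes3}$ and Hermitian $A_x,B_y,C_z\in M_d$ squaring to the identity (observables). *)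

(* Defs.v *)
From Stdlib Require Import Reals.
Open Scope R_scope.

Record Cplx := mkC { Cre : R; Cim : R }.
Definition C0 : Cplx := mkC 0 0.
Definition C1 : Cplx := mkC 1 0.
Definition Cadd (x y : Cplx) : Cplx := mkC (Cre x + Cre y) (Cim x + Cim y).
Definition Cmul (x y : Cplx) : Cplx :=
  mkC (Cre x * Cre y - Cim x * Cim y) (Cre x * Cim y + Cim x * Cre y).
Definition Cconj (x : Cplx) : Cplx := mkC (Cre x) (- Cim x).
Definition CofR (r : R) : Cplx := mkC r 0.
Definition Cnorm2 (x : Cplx) : R := Cre x * Cre x + Cim x * Cim x.
Definition Cabs (x : Cplx) : R := sqrt (Cnorm2 x).

Fixpoint Csum (n : nat) (f : nat -> Cplx) : Cplx :=
  match n with O => C0 | S m => Cadd (Csum m f) (f m) end.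
Fixpoint Rsum (n : nat) (f : nat -> R) : R :=
  match n with O => 0 | S m => Rsum m f + f m end.

Definition Cmul3 (x y z : Cplx) : Cplx := Cmul (Cmul x y) z.

(* A d x d complex matrix, entries M i i' for i, i' < d (other values ignored). *)
Definition Mat := nat -> nat -> Cplx.
(* A vector of (C^d)^{(x)3}, entries v i j k for i, j, k < d. *)
Definition Vec3 := nat -> nat -> nat -> Cplx.
(* A tensor T = (T_{i i' j j' k k'}) in (C^n)^{(x)6}. *)
Definition Tens6 := nat -> nat -> nat -> nat -> nat -> nat -> Cplx.

Definition delta (i j : nat) : Cplx := if Nat.eqb i j then C1 else C0.

Definition is_hermitian_mat (d : nat) (M : Mat) : Prop :=
  forall i i', (i < d)%nat -> (i' < d)%nat -> M i i' = Cconj (M i' i).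

Definition squares_to_id (d : nat) (M : Mat) : Prop :=
  forall i i', (i < d)%nat -> (i' < d)%nat ->
    Csum d (fun m => Cmul (M i m) (M m i')) = delta i i'.

Definition hs_inner (d : nat) (M N : Mat) : Cplx :=
  Csum d (fun i => Csum d (fun i' => Cmul (Cconj (M i i')) (N i i'))).

Definition mat_norm (d : nat) (M : Mat) : R :=
  sqrt (Rsum d (fun i => Rsum d (fun i' => Cnorm2 (M i i')))).

Definition vec3_norm (d : nat) (v : Vec3) : R :=
  sqrt (Rsum d (fun i => Rsum d (fun j => Rsum d (fun k => Cnorm2 (v i j k))))).

(** T Hermitian as an operator on C^{n^3}, rows (i,j,k), columns (i',j',k') *)
Definition tensor_hermitian (n : nat) (T : Tens6) : Prop :=
  forall i i' j j' k k', (i < n)%nat -> (i' < n)%nat -> (j < n)%nat ->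
    (j' < n)%nat -> (k < n)%nat -> (k' < n)%nat ->
    T i i' j j' k k' = Cconj (T i' i j' j k' k).

Definition tensor_nonzero (n : nat) (T : Tens6) : Prop :=
  exists i i' j j' k k', (i < n)%nat /\ (i' < n)%nat /\ (j < n)%nat /\
    (j' < n)%nat /\ (k < n)%nat /\ (k' < n)%nat /\ T i i' j j' k k' <> C0.

Definition spans_Mn (n : nat) (P : nat -> Mat) : Prop :=
  forall M : Mat, exists c : nat -> Cplx,
    forall i i', (i < n)%nat -> (i' < n)%nat ->
      M i i' = Csum (n * n) (fun a => Cmul (c a) (P a i i')).

Definition lin_indep_Mn (n : nat) (P : nat -> Mat) : Prop :=
  forall c : nat -> Cplx,
    (forall i i', (i < n)%nat -> (i' < n)%nat ->
       Csum (n * n) (fun a => Cmul (c a) (P a i i')) = C0) ->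
    forall a, (a < n * n)%nat -> c a = C0.

Definition good_basis (n : nat) (P : nat -> Mat) : Prop :=
  spans_Mn n P /\ lin_indep_Mn n P /\
  (forall a b, (a < n * n)%nat -> (b < n * n)%nat -> a <> b ->
     hs_inner n (P a) (P b) = C0) /\
  (forall a, (a < n * n)%nat -> is_hermitian_mat n (P a)) /\
  (forall a, (a < n * n)%nat -> squares_to_id n (P a)).

Definition tens_apply (n : nat) (T : Tens6) (x : Vec3) : Vec3 :=
  fun i j k => Csum n (fun i' => Csum n (fun j' => Csum n (fun k' =>
    Cmul (T i i' j j' k k') (x i' j' k')))).

(* the set whose supremum is ||T||_{2,eps} (operator norm on C^{n^3}) *)
Definition norm2eps_set (n : nat) (T : Tens6) (r : R) : Prop :=
  exists x : Vec3, vec3_norm n x <= 1 /\ r = vec3_norm n (tens_apply n T x).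

(* the set whose supremum is ||T||_{3,eps} *)
Definition trilinear (n : nat) (T : Tens6) (U V W : Mat) : Cplx :=
  Csum n (fun i => Csum n (fun i' => Csum n (fun j => Csum n (fun j' =>
  Csum n (fun k => Csum n (fun k' =>
    Cmul (T i i' j j' k k') (Cmul3 (U i i') (V j j') (W k k')))))))).

Definition norm3eps_set (n : nat) (T : Tens6) (r : R) : Prop :=
  exists U V W : Mat, mat_norm n U <= 1 /\ mat_norm n V <= 1 /\
    mat_norm n W <= 1 /\ r = Cabs (trilinear n T U V W).

Definition classical_value_set (N : nat) (pi s : nat -> nat -> nat -> R)
  (r : R) : Prop :=
  exists a b c : nat -> R,
    (forall x, (x < N)%nat -> a x = 1 \/ a x = -1) /\
    (forall y, (y < N)%nat -> b y = 1 \/ b y = -1) /\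
    (forall z, (z < N)%nat -> c z = 1 \/ c z = -1) /\
    r = Rabs (Rsum N (fun x => Rsum N (fun y => Rsum N (fun z =>
          pi x y z * s x y z * a x * b y * c z)))).

Definition expect3 (d : nat) (psi : Vec3) (A B C : Mat) : Cplx :=
  Csum d (fun a => Csum d (fun b => Csum d (fun c =>
  Csum d (fun a' => Csum d (fun b' => Csum d (fun c' =>
    Cmul (Cconj (psi a b c))
      (Cmul (Cmul3 (A a a') (B b b') (C c c')) (psi a' b' c')))))))).

Definition is_observable (d : nat) (M : Mat) : Prop :=
  is_hermitian_mat d M /\ squares_to_id d M.

Definition entangled_value_set (N : nat) (pi s : nat -> nat -> nat -> R)
  (r : R) : Prop :=
  exists (d : nat) (psi : Vec3) (A B C : nat -> Mat),
    vec3_norm d psi = 1 /\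
    (forall x, (x < N)%nat -> is_observable d (A x)) /\
    (forall y, (y < N)%nat -> is_observable d (B y)) /\
    (forall z, (z < N)%nat -> is_observable d (C z)) /\
    r = Cabs (Csum N (fun x => Csum N (fun y => Csum N (fun z =>
          Cmul (CofR (pi x y z * s x y z)) (expect3 d psi (A x) (B y) (C z)))))).

Definition Gcoef (n : nat) (T : Tens6) (P : nat -> Mat) (p q r : nat) : Cplx :=
  Csum n (fun i => Csum n (fun i' => Csum n (fun j => Csum n (fun j' =>
  Csum n (fun k => Csum n (fun k' =>
    Cmul (T i i' j j' k k')
      (Cconj (Cmul3 (P p i i') (P q j j') (P r k k'))))))))).

Definition Zsum (n : nat) (T : Tens6) (P : nat -> Mat) : R :=
  Rsum (n * n) (fun p => Rsum (n * n) (fun q => Rsum (n * n) (fun r =>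
    Cabs (Gcoef n T P p q r)))).

Definition game_pi (n : nat) (T : Tens6) (P : nat -> Mat) (p q r : nat) : R :=
  Cabs (Gcoef n T P p q r) / Zsum n T P.

(* sign of G_{P,Q,R} (G_{P,Q,R} is real; its real part carries the sign) *)
Definition game_sign (n : nat) (T : Tens6) (P : nat -> Mat) (p q r : nat) : R :=
  if Rle_dec 0 (Cre (Gcoef n T P p q r)) then 1 else -1.

(* Main.v *)
Require Import Defs.
From Stdlib Require Import Reals.
From Stdlib Require Import Lra Lia Setoid Morphisms Ring FunctionalExtensionality.
Open Scope R_scope.
Import Defs.

Definition Copp (x : Cplx) : Cplx := mkC (- Cre x) (- Cim x).
Definition Csub (x y : Cplx) : Cplx := Cadd x (Copp y).

Lemma Cext : forall x y : Cplx, Cre x = Cre y -> Cim x = Cim y -> x = y.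
Proof. intros [a b] [c d]; simpl; intros; subst; reflexivity. Qed.

Lemma Cring_theory : ring_theory C0 C1 Cadd Cmul Csub Copp (@eq Cplx).
Proof.
  constructor; intros; apply Cext; destruct x; try destruct y; try destruct z;
  unfold Cadd, Cmul, Csub, Copp, C0, C1; simpl; ring.
Qed.
Add Ring Cring : Cring_theory.

Lemma Cconj_mul x y : Cconj (Cmul x y) = Cmul (Cconj x) (Cconj y).
Proof. apply Cext; destruct x, y; simpl; ring. Qed.
Lemma Cconj_add x y : Cconj (Cadd x y) = Cadd (Cconj x) (Cconj y).
Proof. apply Cext; destruct x, y; simpl; ring. Qed.
Lemma Cconj_invol x : Cconj (Cconj x) = x.
Proof. apply Cext; destruct x; simpl; ring. Qed.
Lemma Cconj_CofR r : Cconj (CofR r) = CofR r.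
Proof. apply Cext; simpl; ring. Qed.
Lemma CofR_mul r s : CofR (r * s) = Cmul (CofR r) (CofR s).
Proof. apply Cext; simpl; ring. Qed.
Lemma CofR_add r s : CofR (r + s) = Cadd (CofR r) (CofR s).
Proof. apply Cext; simpl; ring. Qed.
Lemma CofR_1 : CofR 1 = C1. Proof. reflexivity. Qed.
Lemma Cconj_delta i j : Cconj (delta i j) = delta i j.
Proof. unfold delta; destruct (Nat.eqb i j); apply Cext; simpl; ring. Qed.

Lemma Cre_add x y : Cre (Cadd x y) = Cre x + Cre y. Proof. reflexivity. Qed.
Lemma Cre_mul_R r x : Cre (Cmul (CofR r) x) = r * Cre x.
Proof. simpl; ring. Qed.

Lemma Csum_ext n f g : (forall i, (i < n)%nat -> f i = g i) -> Csum n f = Csum n g.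
Proof. induction n; simpl; intros H; auto. rewrite IHn by (intros; apply H; lia). rewrite H by lia; auto. Qed.

Instance Csum_proper : Proper (eq ==> pointwise_relation nat eq ==> eq) Csum.
Proof. intros n m <- f g H. apply Csum_ext; intros; apply H. Qed.

Lemma Rsum_ext n f g : (forall i, (i < n)%nat -> f i = g i) -> Rsum n f = Rsum n g.
Proof. induction n; simpl; intros H; auto. rewrite IHn by (intros; apply H; lia). rewrite H by lia; auto. Qed.

Instance Rsum_proper : Proper (eq ==> pointwise_relation nat eq ==> eq) Rsum.
Proof. intros n m <- f g H. apply Rsum_ext; intros; apply H. Qed.

Lemma Csum_add n f g : Csum n (fun i => Cadd (f i) (g i)) = Cadd (Csum n f) (Csum n g).
Proof. induction n; simpl. ring. rewrite IHn; ring. Qed.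
Lemma Csum_sub n f g : Csum n (fun i => Csub (f i) (g i)) = Csub (Csum n f) (Csum n g).
Proof. induction n; simpl. ring. rewrite IHn; ring. Qed.
Lemma Csum_mul_l n c f : Cmul c (Csum n f) = Csum n (fun i => Cmul c (f i)).
Proof. induction n; simpl. ring. rewrite <- IHn; ring. Qed.
Lemma Csum_mul_r n c f : Cmul (Csum n f) c = Csum n (fun i => Cmul (f i) c).
Proof. induction n; simpl. ring. rewrite <- IHn; ring. Qed.
Lemma Csum_swap n m (f : nat -> nat -> Cplx) :
  Csum n (fun i => Csum m (fun j => f i j)) = Csum m (fun j => Csum n (fun i => f i j)).
Proof. induction n; simpl.
  - induction m; simpl; auto. rewrite <- IHm; ring.
  - rewrite IHn, <- Csum_add. reflexivity. Qed.
Lemma Csum_conj n f : Cconj (Csum n f) = Csum n (fun i => Cconj (f i)).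
Proof. induction n; simpl. apply Cext; simpl; ring. rewrite Cconj_add, IHn; auto. Qed.
Lemma Csum_zero n f : (forall i, (i < n)%nat -> f i = C0) -> Csum n f = C0.
Proof. induction n; simpl; intros H; auto. rewrite IHn by (intros; apply H; lia). rewrite H by lia; ring. Qed.
Lemma Csum_single n f b : (b < n)%nat -> (forall i, (i < n)%nat -> i <> b -> f i = C0) -> Csum n f = f b.
Proof. induction n; intros Hb H; simpl. lia.
  destruct (Nat.eq_dec b n) as [->|Hne].
  - rewrite Csum_zero. ring. intros; apply H; lia.
  - rewrite IHn by (try lia; intros; apply H; lia). rewrite (H n) by lia. ring. Qed.
Lemma delta_eq i : delta i i = C1. Proof. unfold delta; rewrite Nat.eqb_refl; auto. Qed.
Lemma delta_neq i j : i <> j -> delta i j = C0.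
Proof. intros H; unfold delta. destruct (Nat.eqb_spec i j); auto; lia. Qed.
Lemma delta_sym i j : delta i j = delta j i.
Proof. unfold delta; rewrite Nat.eqb_sym; auto. Qed.
Lemma Csum_delta n a f : (a < n)%nat -> Csum n (fun i => Cmul (delta i a) (f i)) = f a.
Proof. intros Ha. rewrite (Csum_single _ _ a Ha). rewrite delta_eq; ring.
  intros; rewrite delta_neq by auto; ring. Qed.
Lemma Csum_const1 n : Csum n (fun _ => C1) = CofR (INR n).
Proof. induction n; simpl. reflexivity. rewrite IHn; apply Cext; simpl; destruct n; simpl; ring. Qed.
Lemma Cre_Csum n f : Cre (Csum n f) = Rsum n (fun i => Cre (f i)).
Proof. induction n; simpl; auto. rewrite IHn; auto. Qed.
Lemma Cim_Csum n f : Cim (Csum n f) = Rsum n (fun i => Cim (f i)).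
Proof. induction n; simpl; auto. rewrite IHn; auto. Qed.
Lemma Rsum_add n f g : Rsum n (fun i => f i + g i) = Rsum n f + Rsum n g.
Proof. induction n; simpl. ring. rewrite IHn; ring. Qed.
Lemma Rsum_scal n c f : Rsum n (fun i => c * f i) = c * Rsum n f.
Proof. induction n; simpl. ring. rewrite IHn; ring. Qed.
Lemma Rsum_nonneg n f : (forall i, (i < n)%nat -> 0 <= f i) -> 0 <= Rsum n f.
Proof. induction n; simpl; intros H. lra. pose proof (H n ltac:(lia)). pose proof (IHn ltac:(intros; apply H; lia)). lra. Qed.
Lemma Rsum_zero_inv n f : (forall i, (i < n)%nat -> 0 <= f i) -> Rsum n f = 0 -> forall i, (i < n)%nat -> f i = 0.
Proof. induction n; simpl; intros H Hs i Hi. lia.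
  pose proof (H n ltac:(lia)). pose proof (Rsum_nonneg n f ltac:(intros; apply H; lia)).
  destruct (Nat.eq_dec i n). subst; lra. apply IHn; try lra; try lia. intros; apply H; lia. Qed.


Lemma Csum_delta_r n a f : (a < n)%nat -> Csum n (fun i => Cmul (delta a i) (f i)) = f a.
Proof. intros. rewrite <- (Csum_delta n a f) by auto. apply Csum_ext; intros; rewrite delta_sym; auto. Qed.

Lemma hs_self n P a : good_basis n P -> (a < n * n)%nat -> hs_inner n (P a) (P a) = CofR (INR n).
Proof.
  intros (Hsp & Hli & Hor & Hh & Hsq) Ha. unfold hs_inner.
  transitivity (Csum n (fun i => Csum n (fun i' => Cmul (P a i' i) (P a i i')))).
  { apply Csum_ext; intros i Hi; apply Csum_ext; intros i' Hi'.
    rewrite (Hh a Ha i i') by auto. rewrite Cconj_invol. auto. }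
  rewrite Csum_swap. rewrite <- Csum_const1. apply Csum_ext; intros i' Hi'.
  rewrite (Hsq a Ha i' i') by auto. apply delta_eq.
Qed.

Lemma hs_coef n P M c b : good_basis n P -> (b < n * n)%nat ->
  (forall i i', (i < n)%nat -> (i' < n)%nat -> M i i' = Csum (n * n) (fun a => Cmul (c a) (P a i i'))) ->
  hs_inner n (P b) M = Cmul (c b) (CofR (INR n)).
Proof.
  intros HG Hb HM. pose proof HG as (Hsp & Hli & Hor & Hh & Hsq). unfold hs_inner.
  transitivity (Csum n (fun i => Csum n (fun i' => Csum (n*n) (fun a => Cmul (c a) (Cmul (Cconj (P b i i')) (P a i i')))))).
  { apply Csum_ext; intros i Hi; apply Csum_ext; intros i' Hi'.
    rewrite HM by auto. rewrite Csum_mul_l. apply Csum_ext; intros; ring. }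

  transitivity (Csum n (fun i => Csum (n*n) (fun a => Csum n (fun i' => Cmul (c a) (Cmul (Cconj (P b i i')) (P a i i')))))).
  { apply Csum_ext; intros; apply Csum_swap. }
  rewrite Csum_swap.
  transitivity (Csum (n*n) (fun a => Cmul (c a) (hs_inner n (P b) (P a)))).
  { apply Csum_ext; intros a Ha. unfold hs_inner. rewrite Csum_mul_l. apply Csum_ext; intros.
    rewrite Csum_mul_l. auto. }
  rewrite (Csum_single _ _ b Hb). rewrite hs_self; auto.
  intros a Ha Hab. rewrite Hor by auto. ring.
Qed.

Lemma expand n P M : good_basis n P -> (0 < n)%nat -> forall u v, (u < n)%nat -> (v < n)%nat ->
  M u v = Csum (n*n) (fun b => Cmul (Cmul (CofR (/ INR n)) (hs_inner n (P b) M)) (P b u v)).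
Proof.
  intros HG Hn u v Hu Hv. pose proof HG as (Hsp & Hli & Hor & Hh & Hsq).
  destruct (Hsp M) as [c Hc]. rewrite Hc by auto. apply Csum_ext; intros b Hb.
  rewrite (hs_coef n P M c b) by auto. f_equal.
  assert (INR n <> 0) by (apply not_0_INR; lia).
  transitivity (Cmul (c b) (CofR (/ INR n * INR n))). rewrite Rinv_l by auto. apply Cext; simpl; ring.
  rewrite CofR_mul; ring.
Qed.

Lemma complete n P i i' a a' : good_basis n P -> (i < n)%nat -> (i' < n)%nat -> (a < n)%nat -> (a' < n)%nat ->
  Csum (n*n) (fun p => Cmul (Cconj (P p i i')) (P p a a')) = Cmul (CofR (INR n)) (Cmul (delta a i) (delta a' i')).
Proof.
  intros HG Hi Hi' Ha Ha'.
  assert (Hn : (0 < n)%nat) by lia.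
  rewrite (expand n P (fun u v => Cmul (delta u i) (delta v i')) HG Hn a a' Ha Ha').
  rewrite Csum_mul_l. apply Csum_ext; intros b Hb.
  assert (E : hs_inner n (P b) (fun u v => Cmul (delta u i) (delta v i')) = Cconj (P b i i')).
  { unfold hs_inner.
    transitivity (Csum n (fun u => Cmul (delta u i) (Csum n (fun v => Cmul (delta v i') (Cconj (P b u v)))))).
    { apply Csum_ext; intros; rewrite Csum_mul_l; apply Csum_ext; intros; ring. }
    rewrite Csum_delta by auto. rewrite Csum_delta by auto. auto. }
  rewrite E.
  assert (INR n <> 0) by (apply not_0_INR; lia).
  transitivity (Cmul (CofR (INR n * / INR n)) (Cmul (Cconj (P b i i')) (P b a a'))).
  rewrite Rinv_r by auto. apply Cext; simpl; ring.
  rewrite CofR_mul; ring.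
Qed.


Lemma Csum_push2 N n m (f : nat -> nat -> nat -> Cplx) :
  Csum N (fun p => Csum n (fun i => Csum m (fun j => f p i j))) =
  Csum n (fun i => Csum m (fun j => Csum N (fun p => f p i j))).
Proof. rewrite Csum_swap; apply Csum_ext; intros; apply Csum_swap. Qed.

Lemma Csum_push4 N n1 n2 n3 n4 (f : nat -> nat -> nat -> nat -> nat -> Cplx) :
  Csum N (fun p => Csum n1 (fun i => Csum n2 (fun j => Csum n3 (fun k => Csum n4 (fun l => f p i j k l))))) =
  Csum n1 (fun i => Csum n2 (fun j => Csum n3 (fun k => Csum n4 (fun l => Csum N (fun p => f p i j k l))))).
Proof. rewrite Csum_push2; apply Csum_ext; intros; apply Csum_ext; intros; apply Csum_push2. Qed.

Lemma Csum_push6 N n (f : nat -> nat -> nat -> nat -> nat -> nat -> nat -> Cplx) :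
  Csum N (fun p => Csum n (fun i => Csum n (fun j => Csum n (fun k => Csum n (fun l =>
     Csum n (fun a => Csum n (fun b => f p i j k l a b))))))) =
  Csum n (fun i => Csum n (fun j => Csum n (fun k => Csum n (fun l =>
     Csum n (fun a => Csum n (fun b => Csum N (fun p => f p i j k l a b))))))).
Proof. rewrite Csum_push4; do 4 (apply Csum_ext; intros); apply Csum_push2. Qed.

Lemma Cmul_Csum2 n m k l (f g : nat -> nat -> Cplx) :
  Cmul (Csum n (fun i => Csum m (fun j => f i j))) (Csum k (fun a => Csum l (fun b => g a b))) =
  Csum n (fun i => Csum m (fun j => Csum k (fun a => Csum l (fun b => Cmul (f i j) (g a b))))).
Proof.
  rewrite Csum_mul_r; apply Csum_ext; intros. rewrite Csum_mul_r; apply Csum_ext; intros.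
  rewrite Csum_mul_l; apply Csum_ext; intros. rewrite Csum_mul_l; apply Csum_ext; intros. auto.
Qed.

Lemma L1 n P (u v : nat -> nat -> Cplx) : good_basis n P ->
  Csum (n*n) (fun p => Cmul (Csum n (fun i => Csum n (fun i' => Cmul (Cconj (P p i i')) (u i i'))))
                            (Csum n (fun a => Csum n (fun a' => Cmul (P p a a') (v a a'))))) =
  Cmul (CofR (INR n)) (Csum n (fun i => Csum n (fun i' => Cmul (u i i') (v i i')))).
Proof.
  intros HG. setoid_rewrite Cmul_Csum2. rewrite Csum_push4.
  rewrite Csum_mul_l. apply Csum_ext; intros i Hi. rewrite Csum_mul_l; apply Csum_ext; intros i' Hi'.
  transitivity (Csum n (fun a => Cmul (delta a i) (Csum n (fun a' => Cmul (delta a' i')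
      (Cmul (CofR (INR n)) (Cmul (u i i') (v a a'))))))).
  2:{ rewrite Csum_delta by auto. rewrite Csum_delta by auto. auto. }
  apply Csum_ext; intros a Ha. rewrite Csum_mul_l; apply Csum_ext; intros a' Ha'.
  transitivity (Cmul (Cmul (u i i') (v a a')) (Csum (n*n) (fun p => Cmul (Cconj (P p i i')) (P p a a')))).
  { rewrite Csum_mul_l; apply Csum_ext; intros; ring. }
  rewrite complete by auto. ring.
Qed.


Ltac distr := repeat (setoid_rewrite Csum_mul_l || setoid_rewrite Csum_mul_r).
Ltac sumext := repeat (apply Csum_ext; intros).

Definition g2 n (T : Tens6) (P : nat -> Mat) r i i' j j' :=
  Csum n (fun k => Csum n (fun k' => Cmul (Cconj (P r k k')) (T i i' j j' k k'))).
Definition g1 n T (P : nat -> Mat) q r i i' :=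
  Csum n (fun j => Csum n (fun j' => Cmul (Cconj (P q j j')) (g2 n T P r i i' j j'))).
Definition e2 n (z : Vec3) (P : nat -> Mat) r i i' j j' :=
  Csum n (fun c => Csum n (fun c' => Cmul (P r c c') (Cmul (Cconj (z i j c)) (z i' j' c')))).
Definition e1 n z (P : nat -> Mat) q r i i' :=
  Csum n (fun b => Csum n (fun b' => Cmul (P q b b') (e2 n z P r i i' b b'))).

Lemma stepA n T P p q r : Gcoef n T P p q r =
  Csum n (fun i => Csum n (fun i' => Cmul (Cconj (P p i i')) (g1 n T P q r i i'))).
Proof.
  unfold Gcoef, g1, g2. distr. sumext.
  unfold Cmul3; rewrite !Cconj_mul; ring.
Qed.

Lemma expect3_reorder d z (A B C : Mat) : expect3 d z A B C =
  Csum d (fun a => Csum d (fun a' => Csum d (fun b => Csum d (fun b' => Csum d (fun c => Csum d (fun c' =>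
    Cmul (Cconj (z a b c)) (Cmul (Cmul3 (A a a') (B b b') (C c c')) (z a' b' c')))))))).
Proof.
  unfold expect3. apply Csum_ext; intros a Ha. rewrite <- Csum_push2.
  apply Csum_ext; intros a' Ha'. apply Csum_ext; intros b Hb. apply Csum_swap.
Qed.

Lemma stepB n z P p q r : expect3 n z (P p) (P q) (P r) =
  Csum n (fun a => Csum n (fun a' => Cmul (P p a a') (e1 n z P q r a a'))).
Proof.
  rewrite expect3_reorder. unfold e1, e2. distr. sumext.
  unfold Cmul3; ring.
Qed.

Lemma Csum_swap22 n1 n2 n3 n4 (f : nat -> nat -> nat -> nat -> Cplx) :
  Csum n1 (fun q => Csum n2 (fun r => Csum n3 (fun i => Csum n4 (fun i' => f q r i i')))) =
  Csum n3 (fun i => Csum n4 (fun i' => Csum n1 (fun q => Csum n2 (fun r => f q r i i')))).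
Proof.
  transitivity (Csum n1 (fun q => Csum n3 (fun i => Csum n4 (fun i' => Csum n2 (fun r => f q r i i'))))).
  { apply Csum_ext; intros; apply Csum_push2. }
  apply Csum_push2.
Qed.

Definition Bform n (T : Tens6) (y x : Vec3) :=
  Csum n (fun i => Csum n (fun j => Csum n (fun k => Cmul (Cconj (y i j k)) (tens_apply n T x i j k)))).

Definition Q6 n (T : Tens6) (z : Vec3) :=
  Csum n (fun i => Csum n (fun i' => Csum n (fun j => Csum n (fun j' => Csum n (fun k => Csum n (fun k' =>
    Cmul (T i i' j j' k k') (Cmul (Cconj (z i j k)) (z i' j' k')))))))).

Lemma Q6_Bform n T z : Q6 n T z = Bform n T z z.
Proof.
  unfold Bform, tens_apply.
  transitivity (Csum n (fun i => Csum n (fun j => Csum n (fun k => Csum n (fun i' => Csum n (fun j' => Csum n (fun k' =>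
    Cmul (T i i' j j' k k') (Cmul (Cconj (z i j k)) (z i' j' k'))))))))).
  2:{ do 3 (apply Csum_ext; intros). rewrite Csum_mul_l; apply Csum_ext; intros.
      rewrite Csum_mul_l; apply Csum_ext; intros. rewrite Csum_mul_l; apply Csum_ext; intros. ring. }
  unfold Q6. apply Csum_ext; intros i Hi. symmetry. rewrite <- Csum_push2.
  apply Csum_ext; intros i' Hi'. apply Csum_ext; intros j Hj. apply Csum_swap.
Qed.

Lemma contraction n T P z : good_basis n P ->
  Csum (n*n) (fun p => Csum (n*n) (fun q => Csum (n*n) (fun r =>
     Cmul (Gcoef n T P p q r) (expect3 n z (P p) (P q) (P r))))) =
  Cmul (CofR (INR n ^ 3)) (Bform n T z z).
Proof.
  intros HG. rewrite <- Q6_Bform. setoid_rewrite stepA. setoid_rewrite stepB.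
  rewrite Csum_push2. setoid_rewrite (L1 n P _ _ HG).
  setoid_rewrite <- Csum_mul_l. rewrite <- Csum_mul_l.
  rewrite Csum_swap22.
  transitivity (Cmul (CofR (INR n)) (Csum n (fun i => Csum n (fun i' =>
     Cmul (CofR (INR n)) (Csum n (fun j => Csum n (fun j' => Csum (n*n) (fun r =>
        Cmul (g2 n T P r i i' j j') (e2 n z P r i i' j j'))))))))).
  { f_equal. do 2 (apply Csum_ext; intros). rewrite Csum_swap. unfold g1, e1.
    etransitivity. { apply Csum_ext; intros r Hr. apply (L1 n P _ _ HG). }
    rewrite <- Csum_mul_l. f_equal.
    apply Csum_push2. }
  transitivity (Cmul (CofR (INR n)) (Csum n (fun i => Csum n (fun i' =>
     Cmul (CofR (INR n)) (Csum n (fun j => Csum n (fun j' =>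
        Cmul (CofR (INR n)) (Csum n (fun k => Csum n (fun k' =>
          Cmul (T i i' j j' k k') (Cmul (Cconj (z i j k)) (z i' j' k')))))))))))).
  { f_equal. apply Csum_ext; intros x _. apply Csum_ext; intros x0 _. f_equal.
    apply Csum_ext; intros x1 _. apply Csum_ext; intros x2 _.
    unfold g2, e2.
    pose proof (L1 n P (fun k k' => T x x0 x1 x2 k k') (fun c c' => Cmul (Cconj (z x x1 c)) (z x0 x2 c')) HG) as HL.
    cbv beta in HL. exact HL. }
  unfold Q6. replace (INR n ^ 3) with (INR n * (INR n * INR n)) by ring.
  rewrite !CofR_mul. distr. sumext. ring.
Qed.


Lemma G_conj n T P p q r : tensor_hermitian n T ->
  is_hermitian_mat n (P p) -> is_hermitian_mat n (P q) -> is_hermitian_mat n (P r) ->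
  Cconj (Gcoef n T P p q r) = Gcoef n T P p q r.
Proof.
  intros HT Hp Hq Hr. unfold Gcoef. repeat setoid_rewrite Csum_conj. symmetry.
  rewrite Csum_swap. apply Csum_ext; intros a Ha; apply Csum_ext; intros b Hb.
  rewrite Csum_swap. apply Csum_ext; intros c Hc; apply Csum_ext; intros d Hd.
  rewrite Csum_swap. apply Csum_ext; intros e He; apply Csum_ext; intros f Hf.
  rewrite (HT a b c d e f) by auto. rewrite (Hp a b) by auto. rewrite (Hq c d) by auto.
  rewrite (Hr e f) by auto. unfold Cmul3. rewrite !Cconj_mul, !Cconj_invol. ring.
Qed.

Lemma G_im n T P p q r : tensor_hermitian n T ->
  is_hermitian_mat n (P p) -> is_hermitian_mat n (P q) -> is_hermitian_mat n (P r) ->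
  Cim (Gcoef n T P p q r) = 0.
Proof.
  intros. pose proof (G_conj n T P p q r H H0 H1 H2) as E.
  assert (Cim (Cconj (Gcoef n T P p q r)) = Cim (Gcoef n T P p q r)) by (rewrite E; auto).
  simpl in H3. lra.
Qed.

Lemma pis_eq n T P p q r : Cim (Gcoef n T P p q r) = 0 ->
  game_pi n T P p q r * game_sign n T P p q r = Cre (Gcoef n T P p q r) / Zsum n T P.
Proof.
  intros Him. unfold game_pi, game_sign, Cabs, Cnorm2. rewrite Him.
  replace (Cre (Gcoef n T P p q r) * Cre (Gcoef n T P p q r) + 0 * 0) with
    (Rsqr (Cre (Gcoef n T P p q r))) by (unfold Rsqr; ring).
  rewrite sqrt_Rsqr_abs.
  destruct (Rle_dec 0 (Cre (Gcoef n T P p q r))).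
  - rewrite Rabs_right by lra. unfold Rdiv. ring.
  - rewrite Rabs_left by lra. unfold Rdiv. ring.
Qed.



Definition vscal c (x : Vec3) : Vec3 := fun i j k => Cmul (CofR c) (x i j k).
Definition vadd (x y : Vec3) : Vec3 := fun i j k => Cadd (x i j k) (y i j k).
Definition vsub (x y : Vec3) : Vec3 := fun i j k => Csub (x i j k) (y i j k).
Definition Nrm n (x : Vec3) := Rsum n (fun i => Rsum n (fun j => Rsum n (fun k => Cnorm2 (x i j k)))).
Definition ipd n (y x : Vec3) :=
  Csum n (fun i => Csum n (fun j => Csum n (fun k => Cmul (Cconj (y i j k)) (x i j k)))).

Lemma Bform_ipd n T y x : Bform n T y x = ipd n y (tens_apply n T x).
Proof. reflexivity. Qed.

Lemma Nrm_ipd n x : Nrm n x = Cre (ipd n x x).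
Proof. unfold Nrm, ipd. rewrite Cre_Csum. apply Rsum_ext; intros. rewrite Cre_Csum.
  apply Rsum_ext; intros. rewrite Cre_Csum. apply Rsum_ext; intros.
  unfold Cnorm2; destruct (x i i0 i1); simpl; ring. Qed.

Lemma Nrm_nonneg n x : 0 <= Nrm n x.
Proof. unfold Nrm. repeat (apply Rsum_nonneg; intros). unfold Cnorm2; nra. Qed.

Lemma vec3_norm_Nrm n x : vec3_norm n x = sqrt (Nrm n x).
Proof. reflexivity. Qed.

Lemma tens_apply_add n T x y : tens_apply n T (vadd x y) = vadd (tens_apply n T x) (tens_apply n T y).
Proof. do 3 (apply functional_extensionality; intros). unfold tens_apply, vadd.
  rewrite <- Csum_add; sumext. rewrite <- Csum_add; sumext. rewrite <- Csum_add; sumext. ring. Qed.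
Lemma tens_apply_sub n T x y : tens_apply n T (vsub x y) = vsub (tens_apply n T x) (tens_apply n T y).
Proof. do 3 (apply functional_extensionality; intros). unfold tens_apply, vsub.
  rewrite <- Csum_sub; sumext. rewrite <- Csum_sub; sumext. rewrite <- Csum_sub; sumext. ring. Qed.
Lemma tens_apply_scal n T c x : tens_apply n T (vscal c x) = vscal c (tens_apply n T x).
Proof. do 3 (apply functional_extensionality; intros). unfold tens_apply, vscal. distr. sumext. ring. Qed.

Lemma Cconj_sub a b : Cconj (Csub a b) = Csub (Cconj a) (Cconj b).
Proof. apply Cext; destruct a, b; simpl; ring. Qed.

Lemma ipd_add_l n a b c : ipd n (vadd a b) c = Cadd (ipd n a c) (ipd n b c).
Proof. unfold ipd, vadd. rewrite <- Csum_add; sumext. rewrite <- Csum_add; sumext.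
  rewrite <- Csum_add; sumext. rewrite Cconj_add; ring. Qed.
Lemma ipd_add_r n a b c : ipd n a (vadd b c) = Cadd (ipd n a b) (ipd n a c).
Proof. unfold ipd, vadd. rewrite <- Csum_add; sumext. rewrite <- Csum_add; sumext.
  rewrite <- Csum_add; sumext. ring. Qed.
Lemma ipd_sub_l n a b c : ipd n (vsub a b) c = Csub (ipd n a c) (ipd n b c).
Proof. unfold ipd, vsub. rewrite <- Csum_sub; sumext. rewrite <- Csum_sub; sumext.
  rewrite <- Csum_sub; sumext. rewrite Cconj_sub; ring. Qed.
Lemma ipd_sub_r n a b c : ipd n a (vsub b c) = Csub (ipd n a b) (ipd n a c).
Proof. unfold ipd, vsub. rewrite <- Csum_sub; sumext. rewrite <- Csum_sub; sumext.
  rewrite <- Csum_sub; sumext. ring. Qed.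
Lemma ipd_scal_l n c a b : ipd n (vscal c a) b = Cmul (CofR c) (ipd n a b).
Proof. unfold ipd, vscal. distr. sumext. rewrite Cconj_mul, Cconj_CofR; ring. Qed.
Lemma ipd_scal_r n c a b : ipd n a (vscal c b) = Cmul (CofR c) (ipd n a b).
Proof. unfold ipd, vscal. distr. sumext. ring. Qed.

Lemma Csum_push3 N n1 n2 n3 (f : nat -> nat -> nat -> nat -> Cplx) :
  Csum N (fun p => Csum n1 (fun a => Csum n2 (fun b => Csum n3 (fun c => f p a b c)))) =
  Csum n1 (fun a => Csum n2 (fun b => Csum n3 (fun c => Csum N (fun p => f p a b c)))).
Proof. rewrite Csum_push2. sumext. apply Csum_swap. Qed.

Lemma Csum_swap33 n (f : nat -> nat -> nat -> nat -> nat -> nat -> Cplx) :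
  Csum n (fun i => Csum n (fun j => Csum n (fun k => Csum n (fun a => Csum n (fun b => Csum n (fun c => f i j k a b c)))))) =
  Csum n (fun a => Csum n (fun b => Csum n (fun c => Csum n (fun i => Csum n (fun j => Csum n (fun k => f i j k a b c)))))).
Proof.
  transitivity (Csum n (fun i => Csum n (fun j => Csum n (fun a => Csum n (fun b => Csum n (fun c => Csum n (fun k => f i j k a b c))))))).
  { apply Csum_ext; intros; apply Csum_ext; intros; apply Csum_push3. }
  transitivity (Csum n (fun i => Csum n (fun a => Csum n (fun b => Csum n (fun c => Csum n (fun j => Csum n (fun k => f i j k a b c))))))).
  { apply Csum_ext; intros; apply Csum_push3. }
  apply Csum_push3.
Qed.

Definition R6 n (T : Tens6) (y x : Vec3) :=
  Csum n (fun i => Csum n (fun j => Csum n (fun k => Csum n (fun a => Csum n (fun b => Csum n (fun c =>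
    Cmul (Cconj (y i j k)) (Cmul (T i a j b k c) (x a b c)))))))).

Lemma Bform_R6 n T y x : Bform n T y x = R6 n T y x.
Proof. unfold Bform, R6, tens_apply. distr. reflexivity. Qed.

Lemma Bform_herm n T x y : tensor_hermitian n T -> Bform n T x y = Cconj (Bform n T y x).
Proof.
  intros HT. rewrite !Bform_R6. unfold R6. repeat setoid_rewrite Csum_conj.
  rewrite (Csum_swap33 n (fun i j k a b c => Cconj (Cmul (Cconj (y i j k)) (Cmul (T i a j b k c) (x a b c))))).
  apply Csum_ext; intros i Hi; apply Csum_ext; intros j Hj; apply Csum_ext; intros k Hk.
  apply Csum_ext; intros a Ha; apply Csum_ext; intros b Hb; apply Csum_ext; intros c Hc.
  rewrite (HT i a j b k c) by auto. rewrite !Cconj_mul, !Cconj_invol. ring.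
Qed.

Lemma polar n T x y : tensor_hermitian n T ->
  Cre (Bform n T (vadd x y) (vadd x y)) - Cre (Bform n T (vsub x y) (vsub x y)) = 4 * Cre (Bform n T y x).
Proof.
  intros HT. rewrite !Bform_ipd, tens_apply_add, tens_apply_sub.
  rewrite ipd_add_l, !ipd_add_r, ipd_sub_l, !ipd_sub_r.
  rewrite <- !Bform_ipd. rewrite (Bform_herm n T x y HT).
  destruct (Bform n T y x), (Bform n T x x), (Bform n T y y). simpl. ring.
Qed.

Lemma Nrm_parallelogram n x y : Nrm n (vadd x y) + Nrm n (vsub x y) = 2 * Nrm n x + 2 * Nrm n y.
Proof.
  unfold Nrm. rewrite <- !Rsum_scal, <- !Rsum_add. apply Rsum_ext; intros.
  rewrite <- !Rsum_scal, <- !Rsum_add. apply Rsum_ext; intros.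
  rewrite <- !Rsum_scal, <- !Rsum_add. apply Rsum_ext; intros.
  unfold vadd, vsub, Cnorm2. destruct (x i i0 i1), (y i i0 i1); simpl. ring.
Qed.

Lemma Nrm_scal n c x : Nrm n (vscal c x) = c * c * Nrm n x.
Proof.
  unfold Nrm. rewrite <- !Rsum_scal. apply Rsum_ext; intros.
  rewrite <- !Rsum_scal. apply Rsum_ext; intros.
  rewrite <- !Rsum_scal. apply Rsum_ext; intros.
  unfold vscal, Cnorm2. destruct (x i i0 i1); simpl. ring.
Qed.

Lemma Bform_scal n T c z : Bform n T (vscal c z) (vscal c z) = Cmul (CofR (c * c)) (Bform n T z z).
Proof. rewrite !Bform_ipd, tens_apply_scal, ipd_scal_l, ipd_scal_r, CofR_mul. ring. Qed.

Lemma Nrm_zero_B n T z : Nrm n z = 0 -> Bform n T z z = C0.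
Proof.
  intros H. unfold Nrm in H.
  assert (Hz : forall i j k, (i < n)%nat -> (j < n)%nat -> (k < n)%nat -> z i j k = C0).
  { intros i j k Hi Hj Hk.
    assert (forall a b c, 0 <= Rsum a (fun j => Rsum b (fun k => Cnorm2 (z c j k)))) as P1.
    { intros. repeat (apply Rsum_nonneg; intros). unfold Cnorm2; nra. }
    pose proof (Rsum_zero_inv n _ (fun c _ => P1 n n c) H i Hi) as H1. simpl in H1.
    assert (forall b, 0 <= Rsum n (fun k => Cnorm2 (z i b k))) as P2.
    { intros. repeat (apply Rsum_nonneg; intros). unfold Cnorm2; nra. }
    pose proof (Rsum_zero_inv n _ (fun b _ => P2 b) H1 j Hj) as H2. simpl in H2.
    assert (forall c, (c < n)%nat -> 0 <= Cnorm2 (z i j c)) as P3 by (intros; unfold Cnorm2; nra).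
    pose proof (Rsum_zero_inv n _ P3 H2 k Hk) as H3. simpl in H3.
    unfold Cnorm2 in H3. apply Cext; simpl; nra. }
  rewrite Bform_ipd. unfold ipd. apply Csum_zero; intros i Hi. apply Csum_zero; intros j Hj.
  apply Csum_zero; intros k Hk. rewrite Hz by auto. apply Cext; simpl; ring.
Qed.



Lemma Cabs_CofR_mul r w : Cabs (Cmul (CofR r) w) = Rabs r * Cabs w.
Proof.
  unfold Cabs. replace (Cnorm2 (Cmul (CofR r) w)) with (Rsqr r * Cnorm2 w).
  rewrite sqrt_mult by (try apply Rle_0_sqr; unfold Cnorm2; nra). rewrite sqrt_Rsqr_abs; auto.
  unfold Cnorm2, Rsqr; destruct w; simpl; ring.
Qed.
Lemma Cabs_nonneg w : 0 <= Cabs w. Proof. apply sqrt_pos. Qed.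
Lemma Cabs_ge_re w : Rabs (Cre w) <= Cabs w.
Proof. unfold Cabs, Cnorm2. rewrite <- sqrt_Rsqr_abs. apply sqrt_le_1_alt. unfold Rsqr; nra. Qed.

Lemma ent_sum n T P w : good_basis n P -> tensor_hermitian n T ->
  Csum (n*n) (fun x => Csum (n*n) (fun y => Csum (n*n) (fun z =>
    Cmul (CofR (game_pi n T P x y z * game_sign n T P x y z)) (expect3 n w (P x) (P y) (P z))))) =
  Cmul (CofR (INR n ^ 3 / Zsum n T P)) (Bform n T w w).
Proof.
  intros HG HT. pose proof HG as (Hsp & Hli & Hor & Hh & Hsq).
  transitivity (Csum (n*n) (fun x => Csum (n*n) (fun y => Csum (n*n) (fun z =>
    Cmul (CofR (/ Zsum n T P)) (Cmul (Gcoef n T P x y z) (expect3 n w (P x) (P y) (P z))))))).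
  { apply Csum_ext; intros x Hx; apply Csum_ext; intros y Hy; apply Csum_ext; intros z Hz.
    assert (Him : Cim (Gcoef n T P x y z) = 0) by (apply G_im; auto).
    rewrite (pis_eq n T P x y z Him).
    destruct (Gcoef n T P x y z) as [g1 g2], (expect3 n w (P x) (P y) (P z)) as [e1 e2].
    simpl in Him; subst. apply Cext; simpl; unfold Rdiv; ring. }
  transitivity (Cmul (CofR (/ Zsum n T P)) (Csum (n*n) (fun x => Csum (n*n) (fun y => Csum (n*n) (fun z =>
    Cmul (Gcoef n T P x y z) (expect3 n w (P x) (P y) (P z))))))).
  { rewrite Csum_mul_l; apply Csum_ext; intros; rewrite Csum_mul_l; apply Csum_ext; intros;
    rewrite Csum_mul_l; reflexivity. }
  rewrite (contraction n T P w HG). unfold Rdiv. rewrite Rmult_comm, CofR_mul. ring.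
Qed.

Lemma ent_elem n T P w : good_basis n P -> tensor_hermitian n T -> 0 < Zsum n T P ->
  vec3_norm n w = 1 ->
  entangled_value_set (n * n) (game_pi n T P) (game_sign n T P) (INR n ^ 3 / Zsum n T P * Cabs (Bform n T w w)).
Proof.
  intros HG HT HZ Hw. pose proof HG as (Hsp & Hli & Hor & Hh & Hsq).
  exists n, w, P, P, P. split; auto. split; [|split; [|split]].
  1-3: intros; split; auto.
  rewrite ent_sum by auto. rewrite Cabs_CofR_mul. rewrite Rabs_right; auto.
  apply Rle_ge. unfold Rdiv. apply Rmult_le_pos. apply pow_le, pos_INR. left; apply Rinv_0_lt_compat; auto.
Qed.


Lemma quad_bound n T P bs : good_basis n P -> tensor_hermitian n T -> 0 < Zsum n T P -> (1 <= n)%nat ->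
  (forall r, entangled_value_set (n * n) (game_pi n T P) (game_sign n T P) r -> r <= bs) ->
  forall z, Rabs (Cre (Bform n T z z)) <= Zsum n T P * bs / INR n ^ 3 * Nrm n z.
Proof.
  intros HG HT HZ Hn Hub z.
  assert (Hm : 0 < INR n ^ 3) by (apply pow_lt, lt_0_INR; lia).
  destruct (Req_dec (Nrm n z) 0) as [H0|H0].
  { rewrite Nrm_zero_B by auto. rewrite H0. simpl. rewrite Rabs_R0. lra. }
  pose proof (Nrm_nonneg n z) as Hnn.
  assert (HN : 0 < Nrm n z) by lra.
  set (s := sqrt (Nrm n z)).
  assert (Hs : 0 < s) by (apply sqrt_lt_R0; auto).
  assert (Hss : s * s = Nrm n z) by (apply sqrt_sqrt; lra).
  set (w := vscal (/ s) z).
  assert (HNw : Nrm n w = 1).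
  { unfold w. rewrite Nrm_scal. rewrite <- Hss. field. lra. }
  assert (Hw : vec3_norm n w = 1) by (rewrite vec3_norm_Nrm, HNw; apply sqrt_1).
  pose proof (Hub _ (ent_elem n T P w HG HT HZ Hw)) as Hle.
  unfold w in Hle. rewrite Bform_scal, Cabs_CofR_mul in Hle.
  rewrite Rabs_right in Hle by (apply Rle_ge; apply Rmult_le_pos; left; apply Rinv_0_lt_compat; lra).
  pose proof (Cabs_ge_re (Bform n T z z)) as Hre.
  set (a := Rabs (Cre (Bform n T z z))) in *. set (b := Cabs (Bform n T z z)) in *.
  set (m := INR n ^ 3) in *. set (Z := Zsum n T P) in *.
  assert (Hab : a <= b) by auto.
  assert (E : / s * / s = / Nrm n z) by (rewrite <- Hss; field; lra).
  rewrite E in Hle.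
  assert (H1 : a <= bs * (Z / m * Nrm n z)).
  { apply Rle_trans with b; auto.
    replace b with (m / Z * (/ Nrm n z * b) * (Z / m * Nrm n z)) by (field; lra).
    apply Rmult_le_compat_r; auto. apply Rmult_le_pos; [|lra]. unfold Rdiv; apply Rmult_le_pos; [lra|].
    left; apply Rinv_0_lt_compat; lra. }
  replace (Z * bs / m * Nrm n z) with (bs * (Z / m * Nrm n z)) by (field; lra). auto.
Qed.

Definition e000 : Vec3 := fun i j k => Cmul (delta i 0) (Cmul (delta j 0) (delta k 0)).

Lemma e000_norm n : (1 <= n)%nat -> vec3_norm n e000 = 1.
Proof.
  intros Hn. rewrite vec3_norm_Nrm, Nrm_ipd.
  replace (ipd n e000 e000) with C1. simpl; apply sqrt_1.
  transitivity (Csum n (fun i => Cmul (delta i 0) (Csum n (fun j => Cmul (delta j 0) (Csum n (fun k => Cmul (delta k 0) C1)))))).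
  { rewrite !Csum_delta by lia. auto. }
  unfold ipd. distr. sumext. unfold e000, delta.
  destruct (Nat.eqb _ 0), (Nat.eqb _ 0), (Nat.eqb _ 0); apply Cext; simpl; ring.
Qed.

Lemma claim2 n T P norm2 bs : good_basis n P -> tensor_hermitian n T -> 0 < Zsum n T P -> (1 <= n)%nat ->
  is_lub (norm2eps_set n T) norm2 ->
  is_lub (entangled_value_set (n * n) (game_pi n T P) (game_sign n T P)) bs ->
  0 <= bs /\ 0 <= norm2 /\ / Zsum n T P * (INR n ^ 3) * norm2 <= bs.
Proof.
  intros HG HT HZ Hn [Hn2u Hn2l] [Hbu Hbl].
  assert (Hm : 0 < INR n ^ 3) by (apply pow_lt, lt_0_INR; lia).
  assert (Hbs : 0 <= bs).
  { eapply Rle_trans; [|apply Hbu; apply (ent_elem n T P e000 HG HT HZ (e000_norm n Hn))].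
    apply Rmult_le_pos; [|apply Cabs_nonneg]. unfold Rdiv; apply Rmult_le_pos; [lra|].
    left; apply Rinv_0_lt_compat; lra. }
  pose proof (quad_bound n T P bs HG HT HZ Hn Hbu) as QB.
  set (K := Zsum n T P * bs / INR n ^ 3) in *.
  assert (HK : 0 <= K).
  { unfold K, Rdiv. apply Rmult_le_pos; [nra|]. left; apply Rinv_0_lt_compat; lra. }
  assert (Hn2 : norm2 <= K).
  { apply Hn2l. intros r [x [Hx ->]].
    rewrite vec3_norm_Nrm. set (v := tens_apply n T x).
    pose proof (Nrm_nonneg n v) as Hv.
    destruct (Req_dec (Nrm n v) 0) as [H0|H0].
    { rewrite H0, sqrt_0; auto. }
    set (h := sqrt (Nrm n v)).
    assert (Hh : 0 < h) by (apply sqrt_lt_R0; lra).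
    assert (Hhh : h * h = Nrm n v) by (apply sqrt_sqrt; lra).
    set (y := vscal (/ h) v).
    assert (HNy : Nrm n y = 1) by (unfold y; rewrite Nrm_scal, <- Hhh; field; lra).
    assert (HNx : Nrm n x <= 1).
    { rewrite vec3_norm_Nrm in Hx. pose proof (Nrm_nonneg n x).
      rewrite <- (sqrt_sqrt (Nrm n x)) by auto. pose proof (sqrt_pos (Nrm n x)). nra. }
    assert (HB : Cre (Bform n T y x) = h).
    { rewrite Bform_ipd. fold v. unfold y. rewrite ipd_scal_l, Cre_mul_R, <- Nrm_ipd, <- Hhh. field. lra. }
    pose proof (polar n T x y HT) as Hp. rewrite HB in Hp.
    pose proof (QB (vadd x y)) as Q1. pose proof (QB (vsub x y)) as Q2.
    pose proof (Nrm_parallelogram n x y) as Hpar.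
    pose proof (Rle_abs (Cre (Bform n T (vadd x y) (vadd x y)))).
    pose proof (Rle_abs (- Cre (Bform n T (vsub x y) (vsub x y)))) as Q3. rewrite Rabs_Ropp in Q3.
    nra. }
  split; auto. split.
  { apply Rle_trans with (vec3_norm n (tens_apply n T e000)). apply sqrt_pos.
    apply Hn2u. exists e000. split; [rewrite e000_norm; auto; lra | reflexivity]. }
  apply Rle_trans with (/ Zsum n T P * INR n ^ 3 * K).
  { apply Rmult_le_compat_l; auto. apply Rmult_le_pos; [left; apply Rinv_0_lt_compat; auto | lra]. }
  unfold K. right. field. split; [|lra]. apply not_0_INR; lia.
Qed.



Definition Umat n (P : nat -> Mat) (a : nat -> R) : Mat :=
  fun i i' => Csum (n*n) (fun p => Cmul (CofR (a p)) (Cconj (P p i i'))).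

Lemma Csum_constR m r : Csum m (fun _ => CofR r) = CofR (INR m * r).
Proof. induction m. apply Cext; simpl; ring. simpl Csum. rewrite IHm, S_INR. apply Cext; simpl; ring. Qed.

Lemma tri_expand n T P a b c :
  Csum (n*n) (fun p => Csum (n*n) (fun q => Csum (n*n) (fun r =>
    Cmul (Gcoef n T P p q r) (CofR (a p * b q * c r))))) =
  trilinear n T (Umat n P a) (Umat n P b) (Umat n P c).
Proof.
  unfold Gcoef.
  transitivity (Csum (n*n) (fun p => Csum (n*n) (fun q => Csum (n*n) (fun r =>
    Csum n (fun i => Csum n (fun i' => Csum n (fun j => Csum n (fun j' => Csum n (fun k => Csum n (fun k' =>
      Cmul (T i i' j j' k k') (Cmul (Cconj (Cmul3 (P p i i') (P q j j') (P r k k'))) (CofR (a p * b q * c r))))))))))))).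
  { sumext. distr. sumext. ring. }
  transitivity (Csum (n*n) (fun p => Csum (n*n) (fun q =>
    Csum n (fun i => Csum n (fun i' => Csum n (fun j => Csum n (fun j' => Csum n (fun k => Csum n (fun k' =>
     Csum (n*n) (fun r =>
      Cmul (T i i' j j' k k') (Cmul (Cconj (Cmul3 (P p i i') (P q j j') (P r k k'))) (CofR (a p * b q * c r))))))))))))).
  { sumext. apply Csum_push6. }
  transitivity (Csum (n*n) (fun p =>
    Csum n (fun i => Csum n (fun i' => Csum n (fun j => Csum n (fun j' => Csum n (fun k => Csum n (fun k' =>
     Csum (n*n) (fun q => Csum (n*n) (fun r =>
      Cmul (T i i' j j' k k') (Cmul (Cconj (Cmul3 (P p i i') (P q j j') (P r k k'))) (CofR (a p * b q * c r))))))))))))).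
  { sumext. apply Csum_push6. }
  rewrite Csum_push6. unfold trilinear, Umat, Cmul3.
  repeat (setoid_rewrite Csum_mul_r || setoid_rewrite Csum_mul_l).
  do 7 (apply Csum_ext; intros). rewrite Csum_swap. sumext.
  rewrite !Cconj_mul, !CofR_mul. ring.
Qed.

Lemma Umat_norm2 n P a : good_basis n P -> (forall p, (p < n*n)%nat -> a p = 1 \/ a p = -1) ->
  Rsum n (fun i => Rsum n (fun i' => Cnorm2 (Umat n P a i i'))) = INR n ^ 3.
Proof.
  intros HG Ha. pose proof HG as (Hsp & Hli & Hor & Hh & Hsq).
  assert (E : Csum n (fun i => Csum n (fun i' => Cmul (Cconj (Umat n P a i i')) (Umat n P a i i'))) = CofR (INR n ^ 3)).
  { unfold Umat. setoid_rewrite Csum_conj.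
    transitivity (Csum n (fun i => Csum n (fun i' => Csum (n*n) (fun p => Csum (n*n) (fun q =>
       Cmul (CofR (a p * a q)) (Cmul (Cconj (P p i i')) (P q i i'))))))).
    { sumext. distr. sumext. rewrite Cconj_mul, Cconj_invol, Cconj_CofR, CofR_mul. ring. }
    rewrite <- Csum_swap22.
    transitivity (Csum (n*n) (fun p => Csum (n*n) (fun q => Cmul (CofR (a p * a q)) (hs_inner n (P p) (P q))))).
    { sumext. unfold hs_inner. distr. reflexivity. }
    transitivity (Csum (n*n) (fun p => CofR (INR n))).
    { apply Csum_ext; intros p Hp. rewrite (Csum_single _ _ p Hp).
      rewrite hs_self by auto. destruct (Ha p Hp) as [-> | ->]; apply Cext; simpl; ring.
      intros q Hq Hqp. rewrite Hor by (auto; lia). ring. }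
    rewrite Csum_constR, mult_INR. f_equal. ring. }
  assert (E2 : Rsum n (fun i => Rsum n (fun i' => Cnorm2 (Umat n P a i i'))) =
    Cre (Csum n (fun i => Csum n (fun i' => Cmul (Cconj (Umat n P a i i')) (Umat n P a i i'))))).
  { rewrite Cre_Csum. apply Rsum_ext; intros. rewrite Cre_Csum. apply Rsum_ext; intros.
    unfold Cnorm2. destruct (Umat n P a i i0); simpl; ring. }
  rewrite E2, E. reflexivity.
Qed.

Lemma tri_scal n T c U V W :
  trilinear n T (fun i i' => Cmul (CofR c) (U i i')) (fun i i' => Cmul (CofR c) (V i i')) (fun i i' => Cmul (CofR c) (W i i')) =
  Cmul (CofR (c * c * c)) (trilinear n T U V W).
Proof. unfold trilinear. distr. sumext. unfold Cmul3. rewrite !CofR_mul. ring. Qed.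

Lemma Rpower_92 n : (1 <= n)%nat -> Rpower (INR n) (9 / 2) = sqrt (INR n ^ 3) ^ 3.
Proof.
  intros Hn. assert (H0 : 0 < INR n) by (apply lt_0_INR; lia).
  rewrite <- (Rpower_pow 3 (INR n) H0).
  rewrite <- Rpower_sqrt by (apply exp_pos). rewrite Rpower_mult.
  rewrite <- Rpower_pow by (apply exp_pos). rewrite Rpower_mult.
  f_equal. simpl. field.
Qed.

Lemma scal_norm n c U : Rsum n (fun i => Rsum n (fun i' => Cnorm2 (Cmul (CofR c) (U i i')))) =
  c * c * Rsum n (fun i => Rsum n (fun i' => Cnorm2 (U i i'))).
Proof.
  rewrite <- Rsum_scal. apply Rsum_ext; intros. rewrite <- Rsum_scal. apply Rsum_ext; intros.
  unfold Cnorm2. destruct (U i i0); simpl; ring.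
Qed.

Lemma claim1 n T P norm3 beta : good_basis n P -> tensor_hermitian n T -> 0 < Zsum n T P -> (1 <= n)%nat ->
  is_lub (norm3eps_set n T) norm3 ->
  is_lub (classical_value_set (n * n) (game_pi n T P) (game_sign n T P)) beta ->
  0 <= beta /\ beta <= / Zsum n T P * Rpower (INR n) (9 / 2) * norm3.
Proof.
  intros HG HT HZ Hn [H3u H3l] [Hbu Hbl].
  pose proof HG as (Hsp & Hli & Hor & Hh & Hsq).
  rewrite Rpower_92 by auto.
  assert (Hm : 0 < INR n ^ 3) by (apply pow_lt, lt_0_INR; lia).
  set (s := sqrt (INR n ^ 3)).
  assert (Hs : 0 < s) by (apply sqrt_lt_R0; auto).
  assert (Hss : s * s = INR n ^ 3) by (apply sqrt_sqrt; lra).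
  split.
  { apply Rle_trans with (Rabs (Rsum (n * n) (fun x => Rsum (n * n) (fun y => Rsum (n * n) (fun z =>
       game_pi n T P x y z * game_sign n T P x y z * 1 * 1 * 1))))).
    apply Rabs_pos. apply Hbu. exists (fun _ => 1), (fun _ => 1), (fun _ => 1). auto 6. }
  apply Hbl. intros r [a [b [c [Ha [Hb [Hc ->]]]]]].
  set (tri := trilinear n T (Umat n P a) (Umat n P b) (Umat n P c)).
  assert (Hsum : Rsum (n * n) (fun x => Rsum (n * n) (fun y => Rsum (n * n) (fun z =>
       game_pi n T P x y z * game_sign n T P x y z * a x * b y * c z))) = / Zsum n T P * Cre tri).
  { unfold tri. rewrite <- tri_expand. rewrite <- Cre_mul_R. rewrite Csum_mul_l, Cre_Csum.
    apply Rsum_ext; intros x Hx. rewrite Csum_mul_l, Cre_Csum.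
    apply Rsum_ext; intros y Hy. rewrite Csum_mul_l, Cre_Csum.
    apply Rsum_ext; intros z Hz.
    assert (Him : Cim (Gcoef n T P x y z) = 0) by (apply G_im; auto).
    rewrite (pis_eq n T P x y z Him). destruct (Gcoef n T P x y z) as [g1 g2].
    simpl in Him; subst. simpl. unfold Rdiv. ring. }
  rewrite Hsum.
  set (U' := fun (A : nat -> R) => fun i i' => Cmul (CofR (/ s)) (Umat n P A i i')).
  assert (HU : forall A, (forall p, (p < n*n)%nat -> A p = 1 \/ A p = -1) -> mat_norm n (U' A) <= 1).
  { intros A HA. unfold mat_norm, U'. rewrite scal_norm, Umat_norm2 by auto. rewrite <- Hss.
    replace (/ s * / s * (s * s)) with 1 by (field; lra). rewrite sqrt_1; lra. }
  assert (Htri : Cabs (trilinear n T (U' a) (U' b) (U' c)) <= norm3).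
  { apply H3u. exists (U' a), (U' b), (U' c). auto. }
  unfold U' in Htri. rewrite tri_scal, Cabs_CofR_mul in Htri. fold tri in Htri.
  rewrite Rabs_right in Htri by (apply Rle_ge; left; apply Rmult_lt_0_compat; [apply Rmult_lt_0_compat|]; apply Rinv_0_lt_compat; lra).
  pose proof (Cabs_ge_re tri).
  assert (Hct : Cabs tri <= s * s * s * norm3).
  { replace (Cabs tri) with (s * s * s * (/ s * / s * / s * Cabs tri)) by (field; lra).
    apply Rmult_le_compat_l; auto. left; apply Rmult_lt_0_compat; [apply Rmult_lt_0_compat|]; lra. }
  rewrite Rabs_mult, Rabs_right by (apply Rle_ge; left; apply Rinv_0_lt_compat; lra).
  replace (s ^ 3) with (s * s * s) by ring.
  assert (0 < / Zsum n T P) by (apply Rinv_0_lt_compat; lra).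
  apply Rle_trans with (/ Zsum n T P * Cabs tri). apply Rmult_le_compat_l; lra.
  rewrite Rmult_assoc. apply Rmult_le_compat_l; lra.
Qed.


Theorem mainTheorem9 (n : nat) (T : Tens6) (P : nat -> Mat)
  (norm2 norm3 beta betastar : R) :
  (1 <= n)%nat ->
  tensor_nonzero n T ->
  tensor_hermitian n T ->
  good_basis n P ->
  0 < Zsum n T P ->
  is_lub (norm2eps_set n T) norm2 ->
  is_lub (norm3eps_set n T) norm3 ->
  is_lub (classical_value_set (n * n) (game_pi n T P) (game_sign n T P)) beta ->
  is_lub (entangled_value_set (n * n) (game_pi n T P) (game_sign n T P)) betastar ->
  beta <= / Zsum n T P * Rpower (INR n) (9 / 2) * norm3 /\
  / Zsum n T P * (INR n ^ 3) * norm2 <= betastar /\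
  Rpower (INR n) (- (3 / 2)) * (norm2 / norm3) * beta <= betastar.
Proof.
  intros Hn _ HT HG HZ H2 H3 Hb Hbs.
  destruct (claim1 n T P norm3 beta HG HT HZ Hn H3 Hb) as [Hb0 Hb1].
  destruct (claim2 n T P norm2 betastar HG HT HZ Hn H2 Hbs) as [Hs0 [Hn20 Hs1]].
  split; auto. split; auto.
  assert (H0 : 0 < INR n) by (apply lt_0_INR; lia).
  assert (HZi : 0 < / Zsum n T P) by (apply Rinv_0_lt_compat; auto).
  assert (HR : 0 < Rpower (INR n) (9 / 2)) by apply exp_pos.
  assert (HRm : 0 < Rpower (INR n) (- (3 / 2))) by apply exp_pos.
  assert (Hprod : Rpower (INR n) (- (3 / 2)) * Rpower (INR n) (9 / 2) = INR n ^ 3).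
  { rewrite <- Rpower_plus. replace (- (3 / 2) + 9 / 2) with (INR 3) by (simpl; field).
    apply Rpower_pow; auto. }
  assert (Hn3 : 0 <= norm3).
  { destruct (Rle_lt_dec 0 norm3); auto.
    assert (/ Zsum n T P * Rpower (INR n) (9 / 2) * norm3 < 0).
    { assert (0 < / Zsum n T P * Rpower (INR n) (9 / 2)) by (apply Rmult_lt_0_compat; auto). nra. }
    lra. }
  destruct (Req_dec norm3 0) as [E|E].
  { rewrite E. unfold Rdiv. rewrite Rinv_0. lra. }
  apply Rle_trans with (Rpower (INR n) (- (3 / 2)) * (norm2 / norm3) * (/ Zsum n T P * Rpower (INR n) (9 / 2) * norm3)).
  { apply Rmult_le_compat_l; auto. apply Rmult_le_pos; [lra|].
    unfold Rdiv; apply Rmult_le_pos; [lra|]. left; apply Rinv_0_lt_compat; lra. }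
  replace (Rpower (INR n) (- (3 / 2)) * (norm2 / norm3) * (/ Zsum n T P * Rpower (INR n) (9 / 2) * norm3))
    with (/ Zsum n T P * (Rpower (INR n) (- (3 / 2)) * Rpower (INR n) (9 / 2)) * norm2) by (field; repeat split; lra).
  rewrite Hprod. auto.
Qed.
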